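(* For every $n\ge 12$, there is an assignment $x:V\to\{-1,1\}$ with $x_{-\mathbf v}=-x_{\mathbf v}$ for all $\mathbf v\in V$ that satisfies clauses of $\Phi_n$ of total weight at least $\frac{3(\sqrt{21}-4)}{2}$.
   Context: Let $\mathbf e_1,\dots,\mathbf e_n$ be the standard basis of $\mathbb R^n$ and $V=\{\frac{1}{\sqrt3}(b_1\mathbf e_i+b_2\mathbf e_j+b_3\mathbf e_k): b_1,b_2,b_3\in\{-1,1\},\ 1\le i<j<k\le n\}$. To each $\mathbf v\in V$ associate a Boolean variable $x_{\mathbf v}\in\{-1,1\}$, with $x_{-\mathbf v}=-x_{\mathbf v}$. $\mathrm{NAE}(y_1,\dots,y_k)$ is satisfied iff not all $y_i$ are equal. $\mathcal C_3$ is the set of clauses $\mathrm{NAE}(x_{\mathbf v_1},x_{\mathbf v_2},x_{\mathbf v_3})$ with $\mathbf v_1=\frac{1}{\sqrt3}(s_1\mathbf e_{i_1}-s_2\mathbf e_{i_2}+s_4\mathbf e_{i_4})$, $\mathbf v_2=\frac{1}{\sqrt3}(s_2\mathbf e_{i_2}-s_3\mathbf e_{i_3}+s_5\mathbf e_{i_5})$, $\mathbf v_3=\frac{1}{\sqrt3}(s_3\mathbf e_{i_3}-s_1\mathbf e_{i_1}+s_6\mathbf e_{i_6})$ for distinct indices $i_1,\dots,i_6\in[n]$ and signs $s_1,\dots,s_6\in\{-1,1\}$. $\mathcal C_5$ is the set of clauses $\mathrm{NAE}(x_{\mathbf v_1},\dots,x_{\mathbf v_5})$ with $\mathbf v_j=\frac{1}{\sqrt3}(s_1\mathbf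 e_{i_1}+s_{2j}\mathbf e_{i_{2j}}+s_{2j+1}\mathbf e_{i_{2j+1}})$ for $j\in\{1,2,3,4\}$ and $\mathbf v_5=\frac{1}{\sqrt3}(s_{10}\mathbf e_{i_{10}}+s_{11}\mathbf e_{i_{11}}+s_{12}\mathbf e_{i_{12}})$ for distinct $i_1,\dots,i_{12}\in[n]$ and signs $s_1,\dots,s_{12}\in\{-1,1\}$. $\Phi_n$ is the instance with clause set $\mathcal C_3\cup\mathcal C_5$, each clause of $\mathcal C_3$ having weight $\frac{1-3/\sqrt{21}}{|\mathcal C_3|}$ and each clause of $\mathcal C_5$ having weight $\frac{3}{\sqrt{21}\,|\mathcal C_5|}$. *)

(* Defs.v *)
From HB Require Import structures.
From mathcomp Require Import all_boot all_order all_algebra.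
Set Implicit Arguments. Unset Strict Implicit. Unset Printing Implicit Defensive.
Import Order.TTheory GRing.Theory Num.Theory.
Local Open Scope ring_scope.

Section Defs.
Variable R : rcfType.
Variable n : nat.

Definition evec (i : 'I_n) : 'rV[R]_n := delta_mx 0 i.

Definition sgb (b : bool) : R := if b then 1 else -1.

Definition tvec (s1 : bool) (i : 'I_n) (s2 : bool) (j : 'I_n)
  (s3 : bool) (k : 'I_n) : 'rV[R]_n :=
  (Num.sqrt 3)^-1 *: (sgb s1 *: evec i + sgb s2 *: evec j + sgb s3 *: evec k).

Definition inV (v : 'rV[R]_n) : Prop :=
  exists (i j k : 'I_n) (b1 b2 b3 : bool),
    (i < j)%N /\ (j < k)%N /\ v = tvec b1 i b2 j b3 k.

(* parameters: index maps (required injective = distinct) and sign maps *)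
Definition clause3 (ix : {ffun 'I_6 -> 'I_n}) (sg : {ffun 'I_6 -> bool})
  : seq 'rV[R]_n :=
  let i k := ix (inord k.-1) in let s k := sg (inord k.-1) in
  [:: tvec (s 1%N) (i 1%N) (~~ s 2%N) (i 2%N) (s 4%N) (i 4%N);
      tvec (s 2%N) (i 2%N) (~~ s 3%N) (i 3%N) (s 5%N) (i 5%N);
      tvec (s 3%N) (i 3%N) (~~ s 1%N) (i 1%N) (s 6%N) (i 6%N)].
(* note: sgb (~~ b) = - sgb b, encoding the minus signs *)

Definition clause5 (ix : {ffun 'I_12 -> 'I_n}) (sg : {ffun 'I_12 -> bool})
  : seq 'rV[R]_n :=
  let i k := ix (inord k.-1) in let s k := sg (inord k.-1) in
  [seq tvec (s 1%N) (i 1%N) (s (2 * j)%N) (i (2 * j)%N)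
            (s (2 * j).+1) (i (2 * j).+1) | j <- [:: 1; 2; 3; 4]%N]
  ++ [:: tvec (s 10%N) (i 10%N) (s 11%N) (i 11%N) (s 12%N) (i 12%N)].

(* the clause sets C_3 and C_5 (clauses = argument lists, duplicates removed) *)
Definition C3 : seq (seq 'rV[R]_n) :=
  undup [seq clause3 p.1 p.2 | p <- enum [pred p : {ffun 'I_6 -> 'I_n} *
                                  {ffun 'I_6 -> bool} | injectiveb p.1]].

Definition C5 : seq (seq 'rV[R]_n) :=
  undup [seq clause5 p.1 p.2 | p <- enum [pred p : {ffun 'I_12 -> 'I_n} *
                                  {ffun 'I_12 -> bool} | injectiveb p.1]].

Definition NAE (x : 'rV[R]_n -> int) (c : seq 'rV[R]_n) : bool :=
  ~~ constant [seq x v | v <- c].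

Definition w3 : R := (1 - 3 / Num.sqrt 21) / (size C3)%:R.
Definition w5 : R := 3 / (Num.sqrt 21 * (size C5)%:R).

Definition satWeight (x : 'rV[R]_n -> int) : R :=
  \sum_(c <- C3 | NAE x c) w3 + \sum_(c <- C5 | NAE x c) w5.

End Defs.

(* Main.v *)
Require Import Defs.
From HB Require Import structures.
From mathcomp Require Import all_boot all_order all_algebra.
From mathcomp Require Import ring lra.
Set Implicit Arguments. Unset Strict Implicit. Unset Printing Implicit Defensive.
Import Order.TTheory GRing.Theory Num.Theory.
Local Open Scope ring_scope.

Definition TT := (bool * bool)%type.

Section Prob.
Variable R : rcfType.
Variable n : nat.
Variable al : R.

Local Notation FF := {ffun 'I_n -> TT}.

Definition pT (t : TT) : R := if t.1 then al / 2 else (1 - al) / 2.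

Lemma sumTT (f : TT -> R) :
  \sum_(t : TT) f t = f (true,true) + f (true,false) + (f (false,true) + f (false,false)).
Proof.
have -> : \sum_(t : TT) f t = \sum_(t : TT | xpredT t.1 && xpredT t.2) f (t.1, t.2).
  by apply: eq_bigr => -[a b].
rewrite -(pair_big xpredT xpredT (fun a b => f (a,b))) /=.
by rewrite big_bool /= !big_bool /= addrA.
Qed.

Lemma sum_pT : \sum_t pT t = 1.
Proof. rewrite sumTT /pT /=. by field. Qed.

Definition mu (tau : {ffun 'I_n -> TT}) : R := \prod_m pT (tau m).
Definition EE (G : {ffun 'I_n -> TT} -> R) : R := \sum_tau mu tau * G tau.
Definition upd (tau : {ffun 'I_n -> TT}) c t : {ffun 'I_n -> TT} :=
  [ffun m => if m == c then t else tau m].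

Lemma sum_mu : \sum_tau mu tau = 1.
Proof.
rewrite /mu -(bigA_distr_bigA (fun (m : 'I_n) t => pT t)) /=.
by rewrite (eq_bigr (fun _ => 1)) ?prodr_const ?expr1n // => m _; rewrite sum_pT.
Qed.

Lemma EE_const c : EE (fun _ => c) = c.
Proof. by rewrite /EE -big_distrl /= sum_mu mul1r. Qed.

Lemma EE_ext G H : (forall tau, G tau = H tau) -> EE G = EE H.
Proof. by move=> e; apply: eq_bigr => t _; rewrite e. Qed.

Lemma EE_add G H : EE (fun t => G t + H t) = EE G + EE H.
Proof. by rewrite /EE -big_split; apply: eq_bigr => t _; rewrite mulrDr. Qed.

Lemma EE_opp G : EE (fun t => - G t) = - EE G.
Proof. by rewrite /EE -sumrN; apply: eq_bigr => t _; rewrite mulrN. Qed.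

Lemma EE_scale c G : EE (fun t => c * G t) = c * EE G.
Proof. by rewrite /EE big_distrr; apply: eq_bigr => t _ /=; rewrite mulrCA. Qed.

Definition mu' c (tau : {ffun 'I_n -> TT}) : R := \prod_(m | m != c) pT (tau m).

Lemma mu_split c (tau : FF) : mu tau = pT (tau c) * mu' c tau.
Proof. by rewrite /mu (bigD1 c) //. Qed.

Lemma mu'_upd c (tau : FF) u : mu' c (upd tau c u) = mu' c tau.
Proof. by apply: eq_bigr => m /negbTE mc; rewrite ffunE mc. Qed.

Lemma upd_upd (tau : FF) c t u : upd (upd tau c t) c u = upd tau c u.
Proof. by apply/ffunP => m; rewrite !ffunE; case: (m == c). Qed.

Lemma upd_id (tau : FF) c : upd tau c (tau c) = tau.
Proof. by apply/ffunP => m; rewrite !ffunE; case: eqP => // ->. Qed.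

Lemma upd_at (tau : FF) c t : upd tau c t c = t.
Proof. by rewrite ffunE eqxx. Qed.

Definition AA c t (G : {ffun 'I_n -> TT} -> R) :=
  \sum_(tau : FF | tau c == t) mu' c tau * G tau.

Lemma AA_indep c t u G : (forall tau v, G (upd tau c v) = G tau) ->
  AA c t G = AA c u G.
Proof.
move=> hG; rewrite /AA.
rewrite (reindex_onto (fun tau : FF => upd tau c t) (fun tau : FF => upd tau c u)); last first.
  by move=> tau /eqP <-; rewrite upd_upd upd_id.
apply: eq_big => tau.
  rewrite upd_at eqxx /= upd_upd; apply/eqP/eqP => [<-|<-]; first by rewrite upd_at.
  by rewrite upd_id.
by move=> _; rewrite mu'_upd hG.
Qed.


Lemma EE_partc c G : EE G = \sum_t pT t * AA c t G.
Proof.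
rewrite /EE (partition_big (fun tau : {ffun 'I_n -> TT} => tau c) xpredT) //=.
apply: eq_bigr => t _; rewrite /AA big_distrr /=.
by apply: eq_bigr => tau /eqP <-; rewrite (mu_split c) mulrA.
Qed.

Lemma EE_AA c t G : (forall tau v, G (upd tau c v) = G tau) -> EE G = AA c t G.
Proof.
move=> hG; rewrite (EE_partc c) (eq_bigr (fun u => pT u * AA c t G)).
  by rewrite -big_distrl /= sum_pT mul1r.
by move=> u _; rewrite (AA_indep t u hG).
Qed.

Lemma EE_step c (F : TT -> {ffun 'I_n -> TT} -> R) :
  (forall t tau v, F t (upd tau c v) = F t tau) ->
  EE (fun tau : {ffun 'I_n -> TT} => F (tau c) tau) = \sum_t pT t * EE (F t).
Proof.
move=> hF; rewrite (EE_partc c); apply: eq_bigr => t _.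
rewrite (EE_AA t (hF t)); congr (_ * _).
by apply: eq_bigr => tau /eqP ->.
Qed.

End Prob.

Section Prob2.
Variable R : rcfType.
Variable n : nat.
Variable al : R.
Local Notation FF := {ffun 'I_n -> TT}.
Local Notation pT := (pT al).
Local Notation EE := (@EE R n al).

Lemma upd_ne (tau : FF) c v m : m != c -> upd tau c v m = tau m.
Proof. by move=> /negbTE h; rewrite ffunE h. Qed.

Lemma EE_ind1 a (f : TT -> R) (G : FF -> R) :
  (forall tau v, G (upd tau a v) = G tau) ->
  EE (fun tau => f (tau a) * G tau) = (\sum_t pT t * f t) * EE G.
Proof.
move=> hG.
rewrite (@EE_step R n al a (fun t tau => f t * G tau)); last by move=> t tau v; rewrite hG.
rewrite big_distrl /=; apply: eq_bigr => t _.
by rewrite EE_scale mulrA.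
Qed.

Lemma EE_ind2 a b (f : TT -> TT -> R) (G : FF -> R) : b != a ->
  (forall tau v, G (upd tau a v) = G tau) ->
  (forall tau v, G (upd tau b v) = G tau) ->
  EE (fun tau => f (tau a) (tau b) * G tau) =
  (\sum_t pT t * \sum_u pT u * f t u) * EE G.
Proof.
move=> ba hGa hGb.
rewrite (@EE_step R n al a (fun t tau => f t (tau b) * G tau)); last first.
  by move=> t tau v; rewrite hGa upd_ne.
rewrite big_distrl /=; apply: eq_bigr => t _.
by rewrite (EE_ind1 (f t)) // mulrA.
Qed.

Lemma EE_ind3 a b c (f : TT -> TT -> TT -> R) : b != a -> c != a -> c != b ->
  EE (fun tau => f (tau a) (tau b) (tau c)) =
  \sum_t pT t * \sum_u pT u * \sum_w pT w * f t u w.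
Proof.
move=> ba ca cb.
rewrite (@EE_step R n al a (fun t tau => f t (tau b) (tau c))); last first.
  by move=> t tau v; rewrite !upd_ne.
apply: eq_bigr => t _; congr (_ * _).
have -> : EE (fun tau => f t (tau b) (tau c)) = EE (fun tau => f t (tau b) (tau c) * 1).
  by apply: EE_ext => tau; rewrite mulr1.
rewrite (EE_ind2 (fun u w => f t u w) (G := fun _ => 1)) // EE_const mulr1.
by [].
Qed.

Definition flipf (sig : 'I_n -> bool) (tau : FF) : FF :=
  [ffun m => ((tau m).1, (tau m).2 (+) sig m)].

Lemma flipfK sig : involutive (flipf sig).
Proof. by move=> tau; apply/ffunP => m; rewrite !ffunE /= addbK; case: (tau m). Qed.

Lemma mu_flip sig tau : mu al (flipf sig tau) = mu al tau.
Proof. by apply: eq_bigr => m _; rewrite ffunE. Qed.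

Lemma EE_flip sig G : EE G = EE (fun tau => G (flipf sig tau)).
Proof.
rewrite /EE (reindex_inj (inv_inj (flipfK sig))) /=.
by apply: eq_bigr => tau _; rewrite mu_flip.
Qed.

End Prob2.

Section Pat.
Variable R : rcfType.
Variable n : nat.
Variable al : R.
Local Notation FF := {ffun 'I_n -> TT}.
Local Notation pT := (pT al).
Local Notation EE := (@EE R n al).

Lemma ordne k (ix : 'I_k.+1 -> 'I_n) (ixinj : injective ix) a b :
  (a <= k)%N -> (b <= k)%N -> a != b -> ix (inord a) != ix (inord b).
Proof.
by move=> ha hb ab; rewrite (inj_eq ixinj) -(inj_eq val_inj) /= !inordK.
Qed.

Ltac dne ixinj := apply: (ordne ixinj).

Lemma EE3pat (ix : 'I_6 -> 'I_n) (ixinj : injective ix) (f1 f2 f3 : TT -> TT -> TT -> R) :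
  let c k := ix (inord k) in
  EE (fun tau => f1 (tau (c 0%N)) (tau (c 1%N)) (tau (c 3%N)) *
        (f2 (tau (c 1%N)) (tau (c 2%N)) (tau (c 4%N)) * f3 (tau (c 2%N)) (tau (c 0%N)) (tau (c 5%N))))
  = \sum_t0 pT t0 * \sum_t1 pT t1 * \sum_t2 pT t2 *
      ((\sum_u pT u * f1 t0 t1 u) * ((\sum_u pT u * f2 t1 t2 u) * (\sum_u pT u * f3 t2 t0 u))).
Proof.
move=> c.
have ne : forall a b, (a <= 5)%N -> (b <= 5)%N -> a != b -> c a != c b by move=> a b; apply: ordne.
rewrite (@EE_step R n al (c 0%N) (fun t tau => f1 t (tau (c 1%N)) (tau (c 3%N)) *
        (f2 (tau (c 1%N)) (tau (c 2%N)) (tau (c 4%N)) * f3 (tau (c 2%N)) t (tau (c 5%N))))); last first.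
  by move=> t tau v; rewrite !upd_ne //; apply: ne.
apply: eq_bigr => t0 _; congr (_ * _).
rewrite (@EE_step R n al (c 1%N) (fun t tau => f1 t0 t (tau (c 3%N)) *
        (f2 t (tau (c 2%N)) (tau (c 4%N)) * f3 (tau (c 2%N)) t0 (tau (c 5%N))))); last first.
  by move=> t tau v; rewrite !upd_ne //; apply: ne.
apply: eq_bigr => t1 _; congr (_ * _).
rewrite (@EE_step R n al (c 2%N) (fun t tau => f1 t0 t1 (tau (c 3%N)) *
        (f2 t1 t (tau (c 4%N)) * f3 t t0 (tau (c 5%N))))); last first.
  by move=> t tau v; rewrite !upd_ne //; apply: ne.
apply: eq_bigr => t2 _; congr (_ * _).
rewrite (@EE_ind1 R n al (c 3%N) (f1 t0 t1) ( fun tau => f2 t1 t2 (tau (c 4%N)) * f3 t2 t0 (tau (c 5%N)))); last first.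
  by move=> tau v; rewrite !upd_ne //; apply: ne.
congr (_ * _).
rewrite (@EE_ind1 R n al (c 4%N) (f2 t1 t2) ( fun tau => f3 t2 t0 (tau (c 5%N)))); last first.
  by move=> tau v; rewrite !upd_ne //; apply: ne.
congr (_ * _).
have -> : EE (fun tau => f3 t2 t0 (tau (c 5%N))) = EE (fun tau => f3 t2 t0 (tau (c 5%N)) * 1).
  by apply: EE_ext => tau; rewrite mulr1.
by rewrite (@EE_ind1 R n al (c 5%N) (f3 t2 t0) (fun _ => 1)) // EE_const mulr1.
Qed.

Definition Q2 (f : TT -> TT -> TT -> R) t := \sum_u pT u * \sum_w pT w * f t u w.

Lemma EE5pat (ix : 'I_12 -> 'I_n) (ixinj : injective ix)
  (f1 f2 f3 f4 g : TT -> TT -> TT -> R) :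
  let c k := ix (inord k) in
  EE (fun tau => f1 (tau (c 0%N)) (tau (c 1%N)) (tau (c 2%N)) *
       (f2 (tau (c 0%N)) (tau (c 3%N)) (tau (c 4%N)) *
       (f3 (tau (c 0%N)) (tau (c 5%N)) (tau (c 6%N)) *
       (f4 (tau (c 0%N)) (tau (c 7%N)) (tau (c 8%N)) *
        g (tau (c 9%N)) (tau (c 10%N)) (tau (c 11%N))))))
  = (\sum_t pT t * (Q2 f1 t * (Q2 f2 t * (Q2 f3 t * Q2 f4 t)))) *
    (\sum_t pT t * \sum_u pT u * \sum_w pT w * g t u w).
Proof.
move=> c.
have ne : forall a b, (a <= 11)%N -> (b <= 11)%N -> a != b -> c a != c b by move=> a b; apply: ordne.
rewrite (@EE_step R n al (c 0%N) (fun t tau => f1 t (tau (c 1%N)) (tau (c 2%N)) *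
       (f2 t (tau (c 3%N)) (tau (c 4%N)) *
       (f3 t (tau (c 5%N)) (tau (c 6%N)) *
       (f4 t (tau (c 7%N)) (tau (c 8%N)) *
        g (tau (c 9%N)) (tau (c 10%N)) (tau (c 11%N))))))); last first.
  by move=> t tau v; rewrite !upd_ne //; apply: ne.
rewrite big_distrl /=; apply: eq_bigr => t _; rewrite -mulrA; congr (_ * _).
rewrite (@EE_ind2 R n al (c 1%N) (c 2%N) (f1 t) ( fun tau => (f2 t (tau (c 3%N)) (tau (c 4%N)) *
       (f3 t (tau (c 5%N)) (tau (c 6%N)) *
       (f4 t (tau (c 7%N)) (tau (c 8%N)) *
        g (tau (c 9%N)) (tau (c 10%N)) (tau (c 11%N))))))); first last.
- by move=> tau v; rewrite !upd_ne //; apply: ne.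
- by move=> tau v; rewrite !upd_ne //; apply: ne.
- by apply: ne.
rewrite -mulrA; congr (_ * _).
rewrite (@EE_ind2 R n al (c 3%N) (c 4%N) (f2 t) ( fun tau => (
       (f3 t (tau (c 5%N)) (tau (c 6%N)) *
       (f4 t (tau (c 7%N)) (tau (c 8%N)) *
        g (tau (c 9%N)) (tau (c 10%N)) (tau (c 11%N))))))); first last.
- by move=> tau v; rewrite !upd_ne //; apply: ne.
- by move=> tau v; rewrite !upd_ne //; apply: ne.
- by apply: ne.
rewrite -mulrA; congr (_ * _).
rewrite (@EE_ind2 R n al (c 5%N) (c 6%N) (f3 t) ( fun tau => (
       (f4 t (tau (c 7%N)) (tau (c 8%N)) *
        g (tau (c 9%N)) (tau (c 10%N)) (tau (c 11%N)))))); first last.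
- by move=> tau v; rewrite !upd_ne //; apply: ne.
- by move=> tau v; rewrite !upd_ne //; apply: ne.
- by apply: ne.
rewrite -mulrA; congr (_ * _).
rewrite (@EE_ind2 R n al (c 7%N) (c 8%N) (f4 t) ( fun tau => g (tau (c 9%N)) (tau (c 10%N)) (tau (c 11%N)))); first last.
- by move=> tau v; rewrite !upd_ne //; apply: ne.
- by move=> tau v; rewrite !upd_ne //; apply: ne.
- by apply: ne.
congr (_ * _).
by rewrite (EE_ind3 al) //; apply: ne.
Qed.

End Pat.

Definition zb (e : bool) : int := if e then 1 else -1.
Definition zt (b a e : bool) : int := if a == b then zb e else 0.
Definition Zb (b a1 e1 a2 e2 a3 e3 : bool) : int := zt b a1 e1 + zt b a2 e2 + zt b a3 e3.
Definition Zf (a1 e1 a2 e2 a3 e3 : bool) : int :=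
  let k := (a1 + a2 + a3)%N in
  let z0 := Zb false a1 e1 a2 e2 a3 e3 in let z1 := Zb true a1 e1 a2 e2 a3 e3 in
  if k == 2%N then z1 - z0 else if k == 3%N then - z1 else z0 + z1.
Definition maj3 x y z := (x && y) || (y && z) || (x && z).
Definition Fe (a1 e1 a2 e2 a3 e3 : bool) : bool :=
  let k := (a1 + a2 + a3)%N in
  let fl a := ((k == 2%N) && ~~ a) || (k == 3%N) in
  maj3 (e1 (+) fl a1) (e2 (+) fl a2) (e3 (+) fl a3).

Lemma Zf_Fe a1 e1 a2 e2 a3 e3 : (0 < Zf a1 e1 a2 e2 a3 e3) = Fe a1 e1 a2 e2 a3 e3.
Proof. by move: a1 e1 a2 e2 a3 e3; do 6! case; vm_compute. Qed.

Lemma Zf_ne0 a1 e1 a2 e2 a3 e3 : Zf a1 e1 a2 e2 a3 e3 != 0.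
Proof. by move: a1 e1 a2 e2 a3 e3; do 6! case; vm_compute. Qed.

Section Bridge.
Variable R : rcfType.
Variable n : nat.
Local Notation FF := {ffun 'I_n -> TT}.

Definition sfl (r : bool) : R := if r then -1 else 1.
Definition n1v (tau : FF) (v : 'rV[R]_n) : nat := (\sum_m ((tau m).1 && (v ord0 m != 0%R)))%N.
Definition Sv (tau : FF) (v : 'rV[R]_n) (b : bool) : R :=
  \sum_m (((tau m).1 == b)%:R * sfl (tau m).2) * v ord0 m.
Definition rr tau v : R :=
  let z0 := Sv tau v false in let z1 := Sv tau v true in
  let k := n1v tau v in if k == 2%N then z1 - z0 else if k == 3%N then - z1 else z0 + z1.
Definition xx (tau : FF) (v : 'rV[R]_n) : int := if 0 < rr tau v then 1 else -1.

Local Notation c3 := ((Num.sqrt (3 : R))^-1).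

Lemma c3_gt0 : 0 < c3.
Proof. by rewrite invr_gt0 sqrtr_gt0 ltr0n. Qed.

Lemma tvecE s1 (i : 'I_n) s2 (j : 'I_n) s3 (k : 'I_n) m :
  tvec R s1 i s2 j s3 k ord0 m =
  c3 * ((m == i)%:R * sgb R s1 + (m == j)%:R * sgb R s2 + (m == k)%:R * sgb R s3).
Proof. rewrite /tvec /evec !mxE /=. ring. Qed.


Lemma sum_delta (g : 'I_n -> R) i : \sum_m g m * (m == i)%:R = g i.
Proof.
rewrite (bigD1 i) //= eqxx mulr1 big1 ?addr0 // => m /negbTE ->.
by rewrite mulr0.
Qed.

Lemma sgb_ne0 s : sgb R s != 0.
Proof. by case: s; rewrite /sgb ?oppr_eq0 oner_eq0. Qed.

Lemma termE b a r s :
  (((a == b)%:R * sfl r) * sgb R s : R) = (zt b a (s (+) r))%:~R.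
Proof.
case: a; case: b; case: r; case: s; rewrite /zt /zb /sfl /sgb /= ?mulr1 ?mul1r ?mulrN ?mulNr ?mul0r ?opprK ?rmorphN ?rmorph1 ?rmorph0.
all: try done.
all: ring.
Qed.

Lemma Sv_tvec (tau : FF) s1 i s2 j s3 k b :
  Sv tau (tvec R s1 i s2 j s3 k) b =
  c3 * (Zb b (tau i).1 (s1 (+) (tau i).2) (tau j).1 (s2 (+) (tau j).2)
             (tau k).1 (s3 (+) (tau k).2))%:~R.
Proof.
pose g m := ((tau m).1 == b)%:R * sfl (tau m).2.
rewrite /Sv (eq_bigr (fun m => c3 * sgb R s1 * (g m * (m == i)%:R) +
   c3 * sgb R s2 * (g m * (m == j)%:R) + c3 * sgb R s3 * (g m * (m == k)%:R))); last first.
  by move=> m _; rewrite tvecE /g; ring.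
rewrite !big_split /= -!big_distrr /= !sum_delta /g.
rewrite /Zb !rmorphD /= -!termE; ring.
Qed.

Lemma n1v_tvec (tau : FF) s1 i s2 j s3 k : i != j -> i != k -> j != k ->
  n1v tau (tvec R s1 i s2 j s3 k) = ((tau i).1 + (tau j).1 + (tau k).1)%N.
Proof.
move=> ij ik jk.
rewrite /n1v (eq_bigr (fun m => ((tau m).1 && (m == i)) + ((tau m).1 && (m == j)) + ((tau m).1 && (m == k))))%N; last first.
  move=> m _; rewrite tvecE.
  have c3n : c3 != 0 by rewrite lt0r_neq0 // c3_gt0.
  case: (eqVneq m i) => [->|mi].
    rewrite ?eqxx ?[j == i]eq_sym ?[k == i]eq_sym ?[k == j]eq_sym ?(negbTE ij) ?(negbTE ik) ?(negbTE jk) /= mulr1n !mulr0n mul1r !mul0r !addr0 mulf_neq0 ?sgb_ne0 //.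
    by case: (tau i).1.
  case: (eqVneq m j) => [->|mj].
    rewrite ?eqxx ?[j == i]eq_sym ?[k == i]eq_sym ?[k == j]eq_sym ?(negbTE ij) ?(negbTE ik) ?(negbTE jk) /= mulr1n !mulr0n mul1r !mul0r add0r addr0 mulf_neq0 ?sgb_ne0 //.
    by case: (tau j).1.
  case: (eqVneq m k) => [->|mk].
    rewrite ?eqxx ?[j == i]eq_sym ?[k == i]eq_sym ?[k == j]eq_sym ?(negbTE ij) ?(negbTE ik) ?(negbTE jk) /= mulr1n !mulr0n mul1r !mul0r !add0r mulf_neq0 ?sgb_ne0 //.
    by case: (tau k).1.
  rewrite ?(negbTE mi) ?(negbTE mj) ?(negbTE mk) /= !mulr0n !mul0r !addr0 mulr0 eqxx.
  by case: (tau m).1.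
rewrite !big_split /=.
have d : forall l, (\sum_m ((tau m).1 && (m == l)))%N = (tau l).1.
  move=> l; rewrite (bigD1 l) //= eqxx andbT big1 ?addn0 // => m /negbTE ->.
  by rewrite andbF.
by rewrite !d.
Qed.

Lemma rr_tvec (tau : FF) s1 i s2 j s3 k : i != j -> i != k -> j != k ->
  rr tau (tvec R s1 i s2 j s3 k) =
  c3 * (Zf (tau i).1 (s1 (+) (tau i).2) (tau j).1 (s2 (+) (tau j).2)
             (tau k).1 (s3 (+) (tau k).2))%:~R.
Proof.
move=> ij ik jk; rewrite /rr n1v_tvec // !Sv_tvec /Zf.
move: (Zb false _ _ _ _ _ _) (Zb true _ _ _ _ _ _) => z0 z1.
case: ifP => _; first by rewrite rmorphB /=; ring.
case: ifP => _; first by rewrite rmorphN /=; ring.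
by rewrite rmorphD /=; ring.
Qed.

Lemma xx_tvec (tau : FF) s1 i s2 j s3 k : i != j -> i != k -> j != k ->
  xx tau (tvec R s1 i s2 j s3 k) =
  if Fe (tau i).1 (s1 (+) (tau i).2) (tau j).1 (s2 (+) (tau j).2)
             (tau k).1 (s3 (+) (tau k).2) then 1 else -1.
Proof.
by move=> ij ik jk; rewrite /xx rr_tvec // pmulr_rgt0 ?c3_gt0 // ltr0z Zf_Fe.
Qed.

Lemma rr_opp (tau : FF) v : rr tau (- v) = - rr tau v.
Proof.
have hn : n1v tau (- v) = n1v tau v.
  by apply: eq_bigr => m _; rewrite mxE oppr_eq0.
have hs : forall b, Sv tau (- v) b = - Sv tau v b.
  by move=> b; rewrite /Sv -sumrN; apply: eq_bigr => m _; rewrite mxE mulrN.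
rewrite /rr hn !hs.
case: ifP => _; first by ring.
by case: ifP => _; ring.
Qed.

Lemma inV_tvec (v : 'rV[R]_n) : inV v -> exists (i j k : 'I_n) s1 s2 s3,
  [/\ i != j, i != k, j != k & v = tvec R s1 i s2 j s3 k].
Proof.
case=> i [j [k [b1 [b2 [b3 [ij [jk ->]]]]]]].
exists i, j, k, b1, b2, b3; split=> //.
- by rewrite -val_eqE /= ltn_eqF.
- by rewrite -val_eqE /= ltn_eqF // (ltn_trans ij).
- by rewrite -val_eqE /= ltn_eqF.
Qed.

Lemma xx_opp (tau : FF) v : inV v -> xx tau (- v) = - xx tau v.
Proof.
move=> /inV_tvec [i [j [k [s1 [s2 [s3 [ij ik jk ->]]]]]]].
have hne : rr tau (tvec R s1 i s2 j s3 k) != 0.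
  by rewrite rr_tvec // mulf_neq0 ?intr_eq0 ?Zf_ne0 // lt0r_neq0 // c3_gt0.
rewrite /xx rr_opp oppr_gt0.
move: hne; rewrite neq_lt => /orP [h|h].
  by rewrite h ltNge (ltW h) /= opprK.
by rewrite h ltNge (ltW h).
Qed.

Lemma xx_pm (tau : FF) v : xx tau v = 1 \/ xx tau v = -1.
Proof. by rewrite /xx; case: ifP; [left|right]. Qed.

End Bridge.

Section C3.
Variable R : rcfType.
Variable al : R.
Local Notation pT := (pT al).

Definition ind (b : bool) : R := b%:R.

Definition f3p (t0 t1 t3 : TT) : R := ind (Fe t0.1 t0.2 t1.1 (~~ t1.2) t3.1 t3.2).
Definition f3m (t0 t1 t3 : TT) : R := ind (~~ Fe t0.1 t0.2 t1.1 (~~ t1.2) t3.1 t3.2).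

Definition S3 f := \sum_t0 pT t0 * \sum_t1 pT t1 * \sum_t2 pT t2 *
      ((\sum_u pT u * f t0 t1 u) * ((\sum_u pT u * f t1 t2 u) * (\sum_u pT u * f t2 t0 u))).

Lemma S3_val : 1 - S3 f3p - S3 f3m = 15/16 - 3/4 * al^+2 + 3/4 * al^+4.
Proof.
rewrite /S3 !sumTT /f3p /f3m /pT /ind /=.
by field.
Qed.
End C3.

Section C5.
Variable R : rcfType.
Variable al : R.
Local Notation pT := (pT al).
Local Notation ind := (@ind R).

Definition f5p (t u w : TT) : R := ind (Fe t.1 t.2 u.1 u.2 w.1 w.2).
Definition f5m (t u w : TT) : R := ind (~~ Fe t.1 t.2 u.1 u.2 w.1 w.2).

Definition S5 f := (\sum_t pT t * (Q2 al f t * (Q2 al f t * (Q2 al f t * Q2 al f t)))) *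
    (\sum_t pT t * \sum_u pT u * \sum_w pT w * f t u w).

Definition P5 : R := 1 - ((3/4 - al^+2/2)^+4 + (1/4 + al^+2/2)^+4) / 2.

Lemma S5_val : 1 - S5 f5p - S5 f5m = P5.
Proof.
have hp : forall t, Q2 al f5p t = if t.2 then 3/4 - al^+2/2 else 1/4 + al^+2/2.
  by case=> [[] []]; rewrite /Q2 !sumTT /pT /f5p /ind /=; field.
have hm : forall t, Q2 al f5m t = if t.2 then 1/4 + al^+2/2 else 3/4 - al^+2/2.
  by case=> [[] []]; rewrite /Q2 !sumTT /pT /f5m /ind /=; field.
have gp : \sum_t pT t * \sum_u pT u * \sum_w pT w * f5p t u w = 1/2.
  by rewrite !sumTT /pT /f5p /ind /=; field.
have gm : \sum_t pT t * \sum_u pT u * \sum_w pT w * f5m t u w = 1/2.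
  by rewrite !sumTT /pT /f5m /ind /=; field.
rewrite /S5 gp gm sumTT sumTT.
rewrite !hp !hm /pT /P5 /=; by field.
Qed.
End C5.

Section D.
Variable R : rcfType.
Variable n : nat.
Variable al : R.
Local Notation FF := {ffun 'I_n -> TT}.
Local Notation ind := (@ind R).
Local Notation f3p := (@f3p R).
Local Notation f3m := (@f3m R).
Local Notation f5p := (@f5p R).
Local Notation f5m := (@f5m R).

Definition sgn (b : bool) : int := if b then 1 else -1.

Lemma NAE3R (a b c : bool) :
  ((~~ constant [:: sgn a; sgn b; sgn c]) %:R : R) =
  1 - ind a * (ind b * ind c) - ind (~~ a) * (ind (~~ b) * ind (~~ c)).
Proof. by case: a; case: b; case: c; rewrite /ind /=; ring. Qed.

Definition sigf k (ix : {ffun 'I_k -> 'I_n}) (sg : {ffun 'I_k -> bool}) (m : 'I_n) : bool :=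
  [exists j, (ix j == m) && sg j].

Lemma sigf_ix k (ix : {ffun 'I_k -> 'I_n}) sg (ixinj : injective ix) j :
  sigf ix sg (ix j) = sg j.
Proof.
apply/existsP/idP => [[j' /andP [/eqP /ixinj -> //]]|sj].
by exists j; rewrite eqxx.
Qed.

Lemma xxb (tau : FF) s1 i s2 j s3 k : i != j -> i != k -> j != k ->
  xx tau (tvec R s1 i s2 j s3 k) =
  sgn (Fe (tau i).1 (s1 (+) (tau i).2) (tau j).1 (s2 (+) (tau j).2)
             (tau k).1 (s3 (+) (tau k).2)).
Proof. exact: xx_tvec. Qed.

Lemma addb_c1 r s : s (+) (r (+) s) = r.
Proof. by case: r; case: s. Qed.
Lemma addb_c2 r s : ~~ s (+) (r (+) s) = ~~ r.
Proof. by case: r; case: s. Qed.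

Lemma clause3E (ix : {ffun 'I_6 -> 'I_n}) (sg : {ffun 'I_6 -> bool}) :
  let i k := ix (inord k) in let s k := sg (inord k) in
  clause3 R ix sg =
  [:: tvec R (s 0%N) (i 0%N) (~~ s 1%N) (i 1%N) (s 3%N) (i 3%N);
      tvec R (s 1%N) (i 1%N) (~~ s 2%N) (i 2%N) (s 4%N) (i 4%N);
      tvec R (s 2%N) (i 2%N) (~~ s 0%N) (i 0%N) (s 5%N) (i 5%N)].
Proof. by []. Qed.

Definition P3 : R := 15/16 - 3/4 * al^+2 + 3/4 * al^+4.

Lemma EC3 (ix : {ffun 'I_6 -> 'I_n}) (sg : {ffun 'I_6 -> bool}) (ixinj : injective ix) :
  EE al (fun tau => (NAE (xx tau) (clause3 R ix sg))%:R) = P3.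
Proof.
have ne : forall a b, (a <= 5)%N -> (b <= 5)%N -> a != b -> ix (inord a) != ix (inord b).
  by move=> a b; apply: ordne.
rewrite (EE_flip al (sigf ix sg)).
pose c k := ix (inord k).
rewrite (@EE_ext R n al _ (fun tau =>
   1 - f3p (tau (c 0%N)) (tau (c 1%N)) (tau (c 3%N)) * (f3p (tau (c 1%N)) (tau (c 2%N)) (tau (c 4%N)) * f3p (tau (c 2%N)) (tau (c 0%N)) (tau (c 5%N)))
     - f3m (tau (c 0%N)) (tau (c 1%N)) (tau (c 3%N)) * (f3m (tau (c 1%N)) (tau (c 2%N)) (tau (c 4%N)) * f3m (tau (c 2%N)) (tau (c 0%N)) (tau (c 5%N))))); last first.
  move=> tau; rewrite clause3E /NAE /=.
  rewrite !xxb; try by apply: ne.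
  rewrite !ffunE !sigf_ix // !addb_c2 !addb_c1 NAE3R.
  by rewrite /f3p /f3m /c.
rewrite EE_add EE_opp EE_add EE_opp EE_const.
rewrite (EE3pat al ixinj f3p f3p f3p) (EE3pat al ixinj f3m f3m f3m).
exact: (S3_val al).
Qed.


Lemma NAE5R (a b c d e : bool) :
  ((~~ constant [:: sgn a; sgn b; sgn c; sgn d; sgn e]) %:R : R) =
  1 - ind a * (ind b * (ind c * (ind d * ind e)))
    - ind (~~ a) * (ind (~~ b) * (ind (~~ c) * (ind (~~ d) * ind (~~ e)))).
Proof. by case: a; case: b; case: c; case: d; case: e; rewrite /ind /=; ring. Qed.

Lemma clause5E (ix : {ffun 'I_12 -> 'I_n}) (sg : {ffun 'I_12 -> bool}) :
  let i k := ix (inord k) in let s k := sg (inord k) in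
  clause5 R ix sg =
  [:: tvec R (s 0%N) (i 0%N) (s 1%N) (i 1%N) (s 2%N) (i 2%N);
      tvec R (s 0%N) (i 0%N) (s 3%N) (i 3%N) (s 4%N) (i 4%N);
      tvec R (s 0%N) (i 0%N) (s 5%N) (i 5%N) (s 6%N) (i 6%N);
      tvec R (s 0%N) (i 0%N) (s 7%N) (i 7%N) (s 8%N) (i 8%N);
      tvec R (s 9%N) (i 9%N) (s 10%N) (i 10%N) (s 11%N) (i 11%N)].
Proof. by []. Qed.

Lemma EC5 (ix : {ffun 'I_12 -> 'I_n}) (sg : {ffun 'I_12 -> bool}) (ixinj : injective ix) :
  EE al (fun tau => (NAE (xx tau) (clause5 R ix sg))%:R) = P5 al.
Proof.
have ne : forall a b, (a <= 11)%N -> (b <= 11)%N -> a != b -> ix (inord a) != ix (inord b).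
  by move=> a b; apply: ordne.
rewrite (EE_flip al (sigf ix sg)).
pose c k := ix (inord k).
rewrite (@EE_ext R n al _ (fun tau =>
   1 - f5p (tau (c 0%N)) (tau (c 1%N)) (tau (c 2%N)) *
       (f5p (tau (c 0%N)) (tau (c 3%N)) (tau (c 4%N)) *
       (f5p (tau (c 0%N)) (tau (c 5%N)) (tau (c 6%N)) *
       (f5p (tau (c 0%N)) (tau (c 7%N)) (tau (c 8%N)) *
        f5p (tau (c 9%N)) (tau (c 10%N)) (tau (c 11%N)))))
     - f5m (tau (c 0%N)) (tau (c 1%N)) (tau (c 2%N)) *
       (f5m (tau (c 0%N)) (tau (c 3%N)) (tau (c 4%N)) *
       (f5m (tau (c 0%N)) (tau (c 5%N)) (tau (c 6%N)) *
       (f5m (tau (c 0%N)) (tau (c 7%N)) (tau (c 8%N)) *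
        f5m (tau (c 9%N)) (tau (c 10%N)) (tau (c 11%N))))))); last first.
  move=> tau; rewrite clause5E /NAE /=.
  rewrite !xxb; try by apply: ne.
  rewrite !ffunE !sigf_ix // !addb_c1 NAE5R.
  by rewrite /f5p /f5m /c.
rewrite EE_add EE_opp EE_add EE_opp EE_const.
rewrite (EE5pat al ixinj f5p f5p f5p f5p f5p) (EE5pat al ixinj f5m f5m f5m f5m f5m).
exact: (S5_val al).
Qed.

End D.

Section M.
Variable R : rcfType.
Variable n : nat.
Variable al : R.
Local Notation FF := {ffun 'I_n -> TT}.

Lemma EE_sum_seq (X : Type) (l : seq X) (F : X -> FF -> R) :
  EE al (fun tau => \sum_(c <- l) F c tau) = \sum_(c <- l) EE al (F c).
Proof.
rewrite /EE (eq_bigr (fun tau => \sum_(c <- l) mu al tau * F c tau)); last first.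
  by move=> tau _; rewrite big_distrr.
by rewrite exchange_big.
Qed.

Lemma sum_const_seq (X : Type) (l : seq X) (k : R) : \sum_(c <- l) k = (size l)%:R * k.
Proof.
elim: l => [|a l IH]; first by rewrite big_nil mul0r.
by rewrite big_cons IH /= mulrSr mulrDl mul1r addrC.
Qed.

Lemma memC3 c : c \in C3 R n ->
  exists (ix : {ffun 'I_6 -> 'I_n}) (sg : {ffun 'I_6 -> bool}), injective ix /\ c = clause3 R ix sg.
Proof.
rewrite mem_undup => /mapP [[ix sg]]; rewrite mem_enum /= => /injectiveP inj ->.
by exists ix, sg.
Qed.

Lemma memC5 c : c \in C5 R n ->
  exists (ix : {ffun 'I_12 -> 'I_n}) (sg : {ffun 'I_12 -> bool}), injective ix /\ c = clause5 R ix sg.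
Proof.
rewrite mem_undup => /mapP [[ix sg]]; rewrite mem_enum /= => /injectiveP inj ->.
by exists ix, sg.
Qed.

Lemma part_sum (l : seq (seq 'rV[R]_n)) w (PP : seq 'rV[R]_n -> R) :
  (forall c, c \in l -> EE al (fun tau => (NAE (xx tau) c)%:R) = PP c) ->
  EE al (fun tau => \sum_(c <- l | NAE (xx tau) c) w) = \sum_(c <- l) w * PP c.
Proof.
move=> hc.
rewrite (@EE_ext R n al _ (fun tau => \sum_(c <- l) w * (NAE (xx tau) c)%:R)); last first.
  move=> tau; rewrite big_mkcond /=; apply: eq_bigr => c _.
  by case: (NAE _ _); rewrite ?mulr1 ?mulr0.
rewrite EE_sum_seq big_seq [RHS]big_seq; apply: eq_bigr => c cl.
by rewrite EE_scale hc.
Qed.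

Lemma EE_satW :
  EE al (fun tau : FF => satWeight (xx tau)) =
  (size (C3 R n))%:R * w3 R n * P3 al + (size (C5 R n))%:R * w5 R n * P5 al.
Proof.
rewrite /satWeight EE_add.
rewrite (@part_sum _ _ (fun _ => P3 al)); last first.
  by move=> c /memC3 [ix [sg [inj ->]]]; apply: EC3.
rewrite (@part_sum _ _ (fun _ => P5 al)); last first.
  by move=> c /memC5 [ix [sg [inj ->]]]; apply: EC5.
by rewrite !sum_const_seq !mulrA.
Qed.

End M.

Lemma size_undup_gt0 (T : eqType) (s : seq T) x : x \in s -> (0 < size (undup s))%N.
Proof. by rewrite -mem_undup; case: (undup s). Qed.

Unset Implicit Arguments.
Set Strict Implicit.

Theorem mainTheorem9 (R : rcfType) (n : nat) (hn : (12 <= n)%N) :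
  exists x : 'rV[R]_n -> int,
    (forall v, inV v -> x v = 1 \/ x v = -1) /\
    (forall v, inV v -> x (- v) = - x v) /\
    satWeight x >= 3 * (Num.sqrt 21 - 4) / 2.
Proof.
set s := Num.sqrt (21 : R).
have s0 : 0 < s by rewrite sqrtr_gt0 ltr0n.
have hs : s ^+ 2 = 21 by rewrite sqr_sqrtr // ler0n.
have hs3 : s ^+ 3 = 21 * s by rewrite exprS hs mulrC.
set z := s / 2 - 9 / 4.
have z0 : 0 <= z by rewrite /z; nra.
set u := Num.sqrt z.
have u0 : 0 <= u by rewrite sqrtr_ge0.
have hu : u ^+ 2 = z by rewrite sqr_sqrtr.
have u14 : u < 1/4.
  have : u ^+ 2 < 1/16 by rewrite hu /z; nra.
  nra.
set be := 1/2 - 2 * u.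
have be0 : 0 < be by rewrite /be; lra.
set al := Num.sqrt be.
have al0 : 0 < al by rewrite sqrtr_gt0.
have hal : al ^+ 2 = be by rewrite sqr_sqrtr // ltW.
have al1 : al < 1.
  have : al * al < 1 by rewrite -expr2 hal /be; lra.
  nra.
have h6 : (6 <= n)%N by apply: leq_trans hn.
pose ix6 : {ffun 'I_6 -> 'I_n} := [ffun k => widen_ord h6 k].
have inj6 : injective ix6.
  by move=> a b; rewrite !ffunE => /(congr1 val) /= /val_inj.
pose ix12 : {ffun 'I_12 -> 'I_n} := [ffun k => widen_ord hn k].
have inj12 : injective ix12.
  by move=> a b; rewrite !ffunE => /(congr1 val) /= /val_inj.
have sz3 : (0 < size (C3 R n))%N.
  apply: (@size_undup_gt0 _ _ (clause3 R ix6 [ffun=> true])).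
  apply/mapP; exists (ix6, [ffun=> true]) => //.
  by rewrite mem_enum /=; apply/injectiveP.
have sz5 : (0 < size (C5 R n))%N.
  apply: (@size_undup_gt0 _ _ (clause5 R ix12 [ffun=> true])).
  apply/mapP; exists (ix12, [ffun=> true]) => //.
  by rewrite mem_enum /=; apply/injectiveP.
have sz3' : (size (C3 R n))%:R != 0 :> R by rewrite pnatr_eq0 -lt0n.
have sz5' : (size (C5 R n))%:R != 0 :> R by rewrite pnatr_eq0 -lt0n.
have sn : s != 0 by rewrite gt_eqF.
have e3 : (size (C3 R n))%:R * w3 R n = 1 - 3 / s.
  by rewrite /w3 -/s; field; rewrite sn sz3'.
have e5 : (size (C5 R n))%:R * w5 R n = 3 / s.
  by rewrite /w5 -/s; field; rewrite sn sz5'.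
have hw : 3 / s = s / 7.
  have -> : (3 : R) = s ^+ 2 / 7 by rewrite hs; field.
  by field; rewrite gt_eqF.
have hP3 : P3 al = 3/4 + 3 * z.
  rewrite /P3 -hu.
  have -> : al ^+ 4 = (al ^+ 2) ^+ 2 by rewrite -exprM.
  rewrite hal /be; by field.
have hP5 : P5 al = 15/16 - 3/2 * z - z ^+ 2.
  rewrite /P5 -hu hal /be; by field.
have hV : 3 * (s - 4) / 2 <= EE al (fun tau : {ffun 'I_n -> TT} => satWeight (xx tau)).
  rewrite EE_satW e3 e5 hw hP3 hP5 /z; lra.
case: (boolP [exists tau : {ffun 'I_n -> TT}, 3 * (s - 4) / 2 <= satWeight (xx tau)]).
  move=> /existsP [tau htau]; exists (xx tau); split; first by move=> v _; apply: xx_pm.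
  by split=> // v hv; apply: xx_opp.
move=> /existsPn hall; exfalso.
have : EE al (fun tau : {ffun 'I_n -> TT} => satWeight (xx tau)) < 3 * (s - 4) / 2.
  have -> : 3 * (s - 4) / 2 = \sum_(tau : {ffun 'I_n -> TT}) mu al tau * (3 * (s - 4) / 2).
    by rewrite -big_distrl /= (@sum_mu R n al) mul1r.
  rewrite /EE.
  apply: ltr_sum.
    by apply/hasP; exists [ffun=> (false, false)]; rewrite ?mem_index_enum.
  move=> tau _; rewrite ltr_pM2l; first by rewrite ltNge; apply: hall.
  rewrite /mu; apply: prodr_gt0 => m _; rewrite /pT; case: ifP => _; lra.
by rewrite ltNge hV.
Qed.
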